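(* $$ \begin{aligned} & \log\mathcal C_2\left(\tfrac14\right)=\frac{\log2}{8}-\frac{G}{2\pi}, \\ &\log\mathcal C_3\left(\tfrac14\right)=\frac{\log2}{32}-\frac{G}{4\pi}+\frac{7\zeta_E(3)}{16\pi^2}, \\ &\log\mathcal C_4\left(\tfrac14\right)=\frac{\log2}{128}-\frac{3G}{32\pi}-\frac{3\zeta_E(3)}{64\pi^2}+\frac{3\beta(4)}{4\pi^3}, \\ &\log\mathcal C_5\left(\tfrac14\right)=\frac{\log2}{512}-\frac{G}{32\pi}-\frac{3\zeta_E(3)}{128\pi^2}+\frac{3\beta(4)}{4\pi^3}-\frac{93\zeta_E(5)}{64\pi^4}. \end{aligned} $$
   Context: For an integer $r\ge2$ let $P_r(y)=(1-y)\exp\left(y+\frac{y^2}{2}+\cdots+\frac{y^r}{r}\right)$. The multiple cosine function of Kurokawa–Koyama of order $r\ge2$ is $\mathcal C_r(x)=\prod_{n\ge1,\ n\text{ odd}}\left\{P_r\left(\frac{x}{n/2}\right)P_r\left(-\frac{x}{n/2}\right)^{(-1)^{r-1}}\right\}^{(n/2)^{r-1}}$, interpreted as $\mathcal C_r(x)=\exp\Big(\sum_{n\ge1,\,n\text{ odd}}(n/2)^{r-1}\big[\operatorname{Log}P_r(2x/n)+(-1)^{r-1}\operatorname{Log}P_r(-2x/n)\big]\Big)$, where $\operatorname{Log}P_r(y):=\operatorname{Log}(1-y)+y+\frac{y^2}{2}+\cdots+\frac{y^r}{r}$ with $\operatorname{Log}$ the principal branch. The series converges and defines a holomorphic function on $D=\mathbb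 C\setminus\big((-\infty,-\tfrac12]\cup[\tfrac12,\infty)\big)$, positive on $(-\tfrac12,\tfrac12)$; $\log\mathcal C_r(x)$ denotes the exponent above (the real logarithm for real $|x|<\tfrac12$). $\zeta_E(s)=\sum_{n=1}^\infty\frac{(-1)^{n+1}}{n^s}$, $\beta(s)=\sum_{n=0}^\infty\frac{(-1)^n}{(2n+1)^s}$, and $G=\beta(2)$ is Catalan's constant. *)

(* Defs.v *)
From Stdlib Require Import Reals.
From Coquelicot Require Import Coquelicot.
Open Scope R_scope.

(* Log P_r(y) = Log(1-y) + y + y^2/2 + ... + y^r/r  (real branch, used for |y| < 1) *)
Definition LogP (r : nat) (y : R) : R :=
  ln (1 - y) + sum_f_R0 (fun j => y ^ (S j) / INR (S j)) (pred r).

Definition logC_term (r : nat) (x : R) (k : nat) : R :=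
  let n := INR (2 * k + 1) in
  (n / 2) ^ (r - 1) * (LogP r (2 * x / n) + (-1) ^ (r - 1) * LogP r (- (2 * x / n))).

(* log C_r(x) for real x with |x| < 1/2 *)
Definition logC (r : nat) (x : R) : R := Series (logC_term r x).

Definition zetaE (s : nat) : R := Series (fun n => (-1) ^ n / INR (n + 1) ^ s).

Definition dbeta (s : nat) : R := Series (fun n => (-1) ^ n / INR (2 * n + 1) ^ s).

Definition Catalan : R := dbeta 2.

(* Main.v *)
Require Import Defs.
From Stdlib Require Import Reals Lra Lia.
From Coquelicot Require Import Coquelicot.
Open Scope R_scope.

Fixpoint ps (f : nat -> R) (N : nat) : R :=
  match N with O => 0 | S n => ps f n + f n end.

Lemma ps_sum_n f N : ps f (S N) = sum_n f N.
Proof.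
  induction N.
  - simpl. rewrite sum_O. lra.
  - rewrite sum_Sn. simpl in *. rewrite <- IHN. reflexivity.
Qed.

Lemma is_series_ps f (l : R) : is_lim_seq (ps f) l -> is_series f l.
Proof.
  intros H. apply is_lim_seq_incr_1 in H.
  apply (is_lim_seq_ext _ (sum_n f)) in H.
  - exact H.
  - intros n; apply ps_sum_n.
Qed.

Lemma ps_is_series f (l : R) : is_series f l -> is_lim_seq (ps f) l.
Proof.
  intros H. apply is_lim_seq_incr_1.
  apply (is_lim_seq_ext (sum_n f)).
  - intros n; symmetry; apply ps_sum_n.
  - exact H.
Qed.

Lemma ps_ext f g N : (forall k, f k = g k) -> ps f N = ps g N.
Proof. intros H; induction N; simpl; auto. rewrite IHN, H; auto. Qed.

Lemma ps_plus f g N : ps (fun k => f k + g k) N = ps f N + ps g N.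
Proof. induction N; simpl; lra. Qed.

Lemma ps_scal c f N : ps (fun k => c * f k) N = c * ps f N.
Proof. induction N; simpl; try rewrite IHN; lra. Qed.

Lemma lim_rate (u : nat -> R) l C :
  (forall N, Rabs (u N - l) <= C / (INR N + 1)) -> is_lim_seq u l.
Proof.
  intros H. apply is_lim_seq_spec. intros eps.
  destruct (INR_archimed eps (Rabs C) (cond_pos eps)) as [n Hn].
  exists n. intros N HN.
  eapply Rle_lt_trans. apply H.
  apply le_INR in HN.
  assert (0 < INR N + 1) by (pose proof (pos_INR N); lra).
  apply Rle_lt_trans with (Rabs C / (INR N + 1)).
  - unfold Rdiv. apply Rmult_le_compat_r. left; apply Rinv_0_lt_compat; lra.
    apply Rle_abs.
  - apply Rmult_lt_reg_r with (INR N + 1); auto.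
    unfold Rdiv; rewrite Rmult_assoc, Rinv_l by lra.
    pose proof (cond_pos eps). nra.
Qed.

Lemma ps_tel N : ps (fun k => 1 / (INR k + 1) - 1 / (INR k + 2)) N = 1 - 1/(INR N + 1).
Proof.
  induction N; simpl ps.
  - simpl. lra.
  - rewrite IHN. rewrite S_INR. field. pose proof (pos_INR N). lra.
Qed.

Lemma ps_shift_diff (a : nat -> R) N M :
  ps a (M + N) - ps a N = ps (fun k => a (N + k)%nat) M.
Proof.
  induction M; simpl.
  - lra.
  - rewrite <- IHM. replace (N + M)%nat with (M + N)%nat by lia. lra.
Qed.

Lemma ps_abs_le (a b : nat -> R) N : (forall k, Rabs (a k) <= b k) ->
  Rabs (ps a N) <= ps b N.
Proof.
  intros H; induction N; simpl.
  - rewrite Rabs_R0; lra.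
  - eapply Rle_trans. apply Rabs_triang. specialize (H N). lra.
Qed.

Lemma tel_pos k : 0 <= 1 / (INR k + 1) - 1 / (INR k + 2).
Proof.
  pose proof (pos_INR k).
  assert (1 / (INR k + 1) - 1 / (INR k + 2) = 1/((INR k+1)*(INR k+2))) by (field; lra).
  rewrite H0. left. apply Rdiv_lt_0_compat; nra.
Qed.

Lemma tail_tel (a : nat -> R) C l N :
  is_series a l ->
  (forall k, Rabs (a k) <= C * (1 / (INR k + 1) - 1 / (INR k + 2))) ->
  Rabs (l - ps a N) <= C / (INR N + 1).
Proof.
  intros Hs Hb.
  apply ps_is_series in Hs.
  assert (HC : 0 <= C).
  { specialize (Hb O). pose proof (Rabs_pos (a O)). simpl in Hb.
    assert (1/(0+1) - 1/(0+2) = /2) by field. rewrite H0 in Hb. lra. }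
  assert (Hl : is_lim_seq (fun M => Rabs (ps a (M + N) - ps a N)) (Rabs (l - ps a N))).
  { apply (is_lim_seq_abs _ (l - ps a N)).
    apply is_lim_seq_minus'. 2: apply is_lim_seq_const.
    apply -> (is_lim_seq_incr_n (ps a) N l). exact Hs. }
  assert (Hle : forall M, Rabs (ps a (M + N) - ps a N) <= C / (INR N + 1)).
  { intros M. rewrite ps_shift_diff.
    eapply Rle_trans. apply ps_abs_le.
    intros k. apply (Hb (N + k)%nat).
    rewrite ps_scal.
    assert (ps (fun k => 1 / (INR (N + k) + 1) - 1 / (INR (N + k) + 2)) M
            = 1/(INR N + 1) - 1/(INR N + INR M + 1)).
    { induction M; simpl ps.
      - simpl. rewrite Rplus_0_r. field. pose proof (pos_INR N). lra.
      - rewrite IHM. rewrite plus_INR, !S_INR. field.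
        pose proof (pos_INR N). pose proof (pos_INR M). lra. }
    rewrite H.
    pose proof (pos_INR N). pose proof (pos_INR M).
    assert (0 < 1/(INR N + INR M + 1)) by (apply Rdiv_lt_0_compat; lra).
    unfold Rdiv in *. nra. }
  apply (is_lim_seq_le _ (fun _ => C / (INR N + 1)) _ _ Hle Hl (is_lim_seq_const _)).
Qed.

Lemma ex_series_tel (a : nat -> R) C :
  (forall k, Rabs (a k) <= C * (1 / (INR k + 1) - 1 / (INR k + 2))) -> ex_series a.
Proof.
  intros Hb. apply (ex_series_le a (fun k => C * (1 / (INR k + 1) - 1 / (INR k + 2)))).
  - intros n. apply Hb.
  - exists (C * 1). apply is_series_ps.
    apply (is_lim_seq_ext (fun N => C * (1 - 1/(INR N + 1)))).
    { intros N. rewrite ps_scal, ps_tel. reflexivity. }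
    apply (lim_rate _ _ (Rabs C)). intros N.
    replace (C * (1 - 1 / (INR N + 1)) - C * 1) with (- (C / (INR N + 1))) by (field; pose proof (pos_INR N); lra).
    rewrite Rabs_Ropp. unfold Rdiv. rewrite Rabs_mult, (Rabs_right (/ _)).
    lra. left; apply Rinv_0_lt_compat; pose proof (pos_INR N); lra.
Qed.

Lemma ps_RInt (f : nat -> R -> R) a b N :
  (forall k, ex_RInt (f k) a b) ->
  is_RInt (fun t => ps (fun k => f k t) N) a b (ps (fun k => RInt (f k) a b) N).
Proof.
  intros H. induction N; simpl.
  - generalize (is_RInt_const a b (0:R)). unfold scal; simpl. unfold mult; simpl.
    rewrite Rmult_0_r. auto.
  - apply (is_RInt_plus (fun t => ps (fun k => f k t) N) (f N)). auto.
    exact (RInt_correct _ _ _ (H N)).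
Qed.

Lemma RInt_series (f : nat -> R -> R) (F : R -> R) a b C :
  a <= b ->
  (forall k, ex_RInt (f k) a b) -> ex_RInt F a b ->
  (forall N t, a <= t <= b -> Rabs (F t - ps (fun k => f k t) N) <= C / (INR N + 1)) ->
  is_series (fun k => RInt (f k) a b) (RInt F a b).
Proof.
  intros Hab Hf HF Hb. apply is_series_ps.
  apply (lim_rate _ _ ((b - a) * C)). intros N.
  pose proof (ps_RInt f a b N Hf) as HN.
  pose proof (is_RInt_minus _ _ _ _ _ _ (RInt_correct _ _ _ HF) HN) as Hm.
  rewrite Rabs_minus_sym.
  assert (Hpos : 0 < INR N + 1) by (pose proof (pos_INR N); lra).
  replace ((b - a) * C / (INR N + 1)) with ((b - a) * (C / (INR N + 1))) by (field; lra).
  refine (norm_RInt_le_const _ _ _ _ (C / (INR N + 1)) Hab _ Hm).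
  intros x Hx. apply Hb; auto.
Qed.

Definition gtm (x : R) (n : nat) : R := 2 * x / (x ^ 2 - (INR n + 1) ^ 2).
Definition G2 (x : R) : R := Series (gtm x).

Lemma gt_bound x a k : Rabs x <= a -> a < 1 ->
  Rabs (gtm x k) <= 4 / (1 - a ^ 2) * (1 / (INR k + 1) - 1 / (INR k + 2)).
Proof.
  intros Hx Ha. unfold gtm.
  pose proof (pos_INR k) as Hk.
  assert (Ha0 : 0 <= a) by (pose proof (Rabs_pos x); lra).
  assert (Hx2 : x ^ 2 <= a ^ 2).
  { replace (x ^ 2) with (Rabs x ^ 2). apply pow_incr; split; auto; apply Rabs_pos.
    simpl. rewrite !Rmult_1_r. rewrite <- Rabs_mult. apply Rabs_right.
    nra. }
  assert (Ha2 : a ^ 2 < 1) by nra.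
  set (D := (INR k + 1) ^ 2 - x ^ 2).
  assert (HD : (1 - a ^ 2) * ((INR k + 1) * (INR k + 2)) / 2 <= D).
  { unfold D. nra. }
  assert (HD0 : 0 < (1 - a ^ 2) * ((INR k + 1) * (INR k + 2)) / 2).
  { apply Rmult_lt_0_compat; [|lra]. apply Rmult_lt_0_compat; nra. }
  replace (x ^ 2 - (INR k + 1) ^ 2) with (- D) by (unfold D; ring).
  replace (4 / (1 - a ^ 2) * (1 / (INR k + 1) - 1 / (INR k + 2)))
    with (2 / ((1 - a ^ 2) * ((INR k + 1) * (INR k + 2)) / 2)) by (field; repeat split; try lra; try nra).
  unfold Rdiv. rewrite Rabs_mult, Rabs_Rinv by lra. rewrite Rabs_Ropp, (Rabs_right D) by lra.
  rewrite Rabs_mult, (Rabs_right 2) by lra.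
  assert (Rabs x <= 1) by lra.
  apply Rmult_le_compat. apply Rmult_le_pos; [lra| apply Rabs_pos].
  left; apply Rinv_0_lt_compat; lra. nra.
  apply Rinv_le_contravar; lra.
Qed.

Lemma G2_series x : Rabs x < 1 -> is_series (gtm x) (G2 x).
Proof.
  intros Hx. apply Series_correct.
  apply (ex_series_tel _ (4 / (1 - Rabs x ^ 2))). intros k. apply gt_bound; lra.
Qed.

Lemma G2_tail x a N : Rabs x <= a -> a < 1 ->
  Rabs (G2 x - ps (gtm x) N) <= 4 / (1 - a ^ 2) / (INR N + 1).
Proof.
  intros Hx Ha. apply tail_tel. apply G2_series; lra.
  intros k; apply gt_bound; auto.
Qed.

Lemma ps_gt_derive y n : Rabs y < 1 -> ex_derive (fun y => ps (gtm y) n) y.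
Proof.
  intros Hy. induction n; simpl.
  - apply ex_derive_const.
  - apply (ex_derive_plus (fun y => ps (gtm y) n) (fun y => gtm y n)). auto.
    unfold gtm. auto_derive.
    assert (y ^ 2 < 1).
    { replace (y ^ 2) with (Rabs y ^ 2). 
      assert (0 <= Rabs y) by apply Rabs_pos. nra.
      simpl. rewrite !Rmult_1_r. rewrite <- Rabs_mult. apply Rabs_right. nra. }
    pose proof (pos_INR n). nra.
Qed.

Lemma G2_cont c : Rabs c < 1 -> continuity_pt G2 c.
Proof.
  intros Hc.
  set (a := (1 + Rabs c) / 2).
  assert (Ha : 0 < a) by (unfold a; pose proof (Rabs_pos c); lra).
  assert (Ha1 : a < 1) by (unfold a; lra).
  apply (CVU_continuity (fun n y => ps (gtm y) n) G2 0 (mkposreal a Ha)).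
  - intros eps Heps.
    destruct (INR_archimed eps (4 / (1 - a ^ 2)) Heps) as [n Hn].
    exists n. intros m y Hm Hy.
    unfold Boule in Hy. simpl in Hy. rewrite Rminus_0_r in Hy.
    eapply Rle_lt_trans. apply (G2_tail y a m); lra.
    apply le_INR in Hm.
    assert (0 < 1 - a ^ 2) by nra.
    assert (0 < 4 / (1 - a ^ 2)) by (apply Rdiv_lt_0_compat; lra).
    apply Rmult_lt_reg_r with (INR m + 1). pose proof (pos_INR m); lra.
    unfold Rdiv at 1. rewrite Rmult_assoc, Rinv_l by (pose proof (pos_INR m); lra). nra.
  - intros n y Hy. unfold Boule in Hy. simpl in Hy. rewrite Rminus_0_r in Hy.
    apply continuity_pt_filterlim. apply (ex_derive_continuous (fun y => ps (gtm y) n)). apply ps_gt_derive. lra.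
  - unfold Boule. simpl. rewrite Rminus_0_r. unfold a. lra.
Qed.

Lemma G2_odd x : Rabs x < 1 -> G2 (- x) = - G2 x.
Proof.
  intros Hx. unfold G2.
  rewrite <- Series_opp.
  apply Series_ext. intros n. unfold gtm. replace ((-x)^2) with (x^2) by ring.
  unfold Rdiv. ring.
Qed.

Lemma G2_0 : G2 0 = 0.
Proof.
  pose proof (G2_odd 0). rewrite Ropp_0 in H. rewrite Rabs_R0 in H. specialize (H ltac:(lra)). lra.
Qed.

Definition gN (x : R) (N : nat) : R := 1 / x + ps (gtm x) N.
Definition gg (x : R) : R := 1 / x + G2 x.

Lemma sq_lt1 x : 0 < x < 1 -> forall N, x ^ 2 - (INR N + 1) ^ 2 <> 0.
Proof. intros Hx N. pose proof (pos_INR N). nra. Qed.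

Lemma gN_refl x N : 0 < x < 1 ->
  gN (1 - x) N = - (gN x N + 1 / (x - INR N - 1) - 1 / (x + INR N)).
Proof.
  intros Hx. induction N.
  - unfold gN. simpl. field. lra.
  - unfold gN in *. simpl ps. rewrite <- Rplus_assoc, IHN. unfold gtm.
    rewrite S_INR. pose proof (pos_INR N).
    assert ((1 - x) ^ 2 - (INR N + 1) ^ 2 <> 0) by nra.
    assert (x ^ 2 - (INR N + 1) ^ 2 <> 0) by nra.
    field. repeat split; try lra; try nra.
Qed.

Lemma gN_dup x N : 0 < x < 1 ->
  gN (x / 2) N + gN ((x + 1) / 2) N = 2 * gN x (2 * N) + 2 / (x + 2 * INR N + 1).
Proof.
  intros Hx. induction N.
  - unfold gN. simpl. field. lra.
  - replace (2 * S N)%nat with (S (S (2 * N))) by lia.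
    unfold gN in *. cbn [ps].
    replace (1 / (x / 2) + (ps (gtm (x / 2)) N + gtm (x / 2) N) +
      (1 / ((x + 1) / 2) + (ps (gtm ((x + 1) / 2)) N + gtm ((x + 1) / 2) N)))
    with ((1 / (x / 2) + ps (gtm (x / 2)) N + (1 / ((x + 1) / 2) + ps (gtm ((x + 1) / 2)) N))
          + gtm (x / 2) N + gtm ((x + 1) / 2) N) by ring.
    rewrite IHN. set (P := ps (gtm x) (2 * N)). unfold gtm.
    rewrite ?S_INR, ?mult_INR. simpl INR. pose proof (pos_INR N).
    assert ((x/2) ^ 2 - (INR N + 1) ^ 2 <> 0) by nra.
    assert (((x + 1)/2) ^ 2 - (INR N + 1) ^ 2 <> 0) by nra.
    assert (x ^ 2 - (2 * INR N + 1) ^ 2 <> 0) by nra.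
    assert (x ^ 2 - (2 * INR N + 1 + 1) ^ 2 <> 0) by nra.
    field. repeat split; try lra; try nra.
Qed.

Lemma gN_lim x : 0 < Rabs x < 1 -> is_lim_seq (gN x) (gg x).
Proof.
  intros Hx. unfold gN, gg. apply is_lim_seq_plus'. apply is_lim_seq_const.
  apply ps_is_series. apply G2_series. lra.
Qed.

Lemma inv_lim (c : R) : is_lim_seq (fun N => 1 / (c + INR N)) 0.
Proof.
  apply (is_lim_seq_ext (fun N => / (c + INR N))). intros; unfold Rdiv; ring.
  replace (Finite 0) with (Rbar_inv p_infty) by reflexivity.
  apply is_lim_seq_inv. 2: discriminate.
  apply is_lim_seq_plus with c p_infty. apply is_lim_seq_const. apply is_lim_seq_INR.
  reflexivity.
Qed.

Lemma lim_eq (u v : nat -> R) (l1 l2 : R) :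
  (forall n, u n = v n) -> is_lim_seq u l1 -> is_lim_seq v l2 -> l1 = l2.
Proof.
  intros E H1 H2. apply is_lim_seq_unique in H1. apply is_lim_seq_unique in H2.
  rewrite (Lim_seq_ext u v E) in H1. rewrite H1 in H2. injection H2; auto.
Qed.

Lemma lim_opp (u : nat -> R) (l : R) : is_lim_seq u l -> is_lim_seq (fun n => - u n) (- l).
Proof. intros H. apply (is_lim_seq_opp u l) in H. exact H. Qed.

Lemma lim_scal (u : nat -> R) (a l : R) : is_lim_seq u l -> is_lim_seq (fun n => a * u n) (a * l).
Proof. intros H. apply (is_lim_seq_scal_l u a l) in H. exact H. Qed.

Lemma gg_refl x : 0 < x < 1 -> gg (1 - x) = - gg x.
Proof.
  intros Hx.
  apply (lim_eq (gN (1 - x)) (fun N => - (gN x N + 1 / (x - INR N - 1) - 1 / (x + INR N)))).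
  - intros; apply gN_refl; auto.
  - apply gN_lim. rewrite Rabs_right; lra.
  - replace (- gg x) with (- (gg x + - 0 - 0)) by ring.
    apply lim_opp. apply is_lim_seq_minus'. apply is_lim_seq_plus'.
    apply gN_lim. rewrite Rabs_right; lra.
    apply (is_lim_seq_ext (fun N => - (1 / ((1 - x) + INR N)))).
    { intros N. field. pose proof (pos_INR N). split; lra. }
    apply lim_opp. apply inv_lim. apply inv_lim.
Qed.

Lemma double_ev : filterlim (fun n : nat => (2 * n)%nat) eventually eventually.
Proof.
  intros P [N HN]. exists N. intros n Hn. apply HN. lia.
Qed.

Lemma gg_dup x : 0 < x < 1 -> gg (x / 2) + gg ((x + 1) / 2) = 2 * gg x.
Proof.
  intros Hx.
  apply (lim_eq (fun N => gN (x / 2) N + gN ((x + 1) / 2) N)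
           (fun N => 2 * gN x (2 * N) + 2 / (x + 2 * INR N + 1))).
  - intros; apply gN_dup; auto.
  - apply is_lim_seq_plus'; apply gN_lim; rewrite Rabs_right; lra.
  - replace (2 * gg x) with (2 * gg x + 0) by ring.
    apply is_lim_seq_plus'. apply lim_scal.
    apply (is_lim_seq_subseq (gN x) (gg x) (fun n => (2 * n)%nat)). apply double_ev.
    apply gN_lim; rewrite Rabs_right; lra.
    apply (is_lim_seq_ext (fun N => 1 / ((x + 1) / 2 + INR N))).
    { intros N. field. pose proof (pos_INR N). lra. }
    apply inv_lim.
Qed.

Lemma sin_lb1 u : 0 <= u <= 1 -> u - u^3/6 <= sin u.
Proof.
  intros. pose proof (sin_bound u 0). pose proof PI_RGT_0. pose proof PI2_1.
  unfold sin_approx, sin_term in H0. simpl in H0.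
  assert (u <= PI) by lra. destruct (H0 ltac:(lra) H3). lra.
Qed.

Lemma cos_b1 u : 0 <= u <= 1 -> 1 - u^2/2 <= cos u <= 1 - u^2/2 + u^4/24.
Proof.
  intros. pose proof (cos_bound u 0). pose proof PI_RGT_0. pose proof PI2_1.
  unfold cos_approx, cos_term in H0. simpl in H0.
  destruct H0; lra.
Qed.

Definition cotp (x : R) : R := PI * cos (PI * x) / sin (PI * x).

Lemma cotp_refl x : cotp (1 - x) = - cotp x.
Proof.
  unfold cotp. replace (PI * (1 - x)) with (PI - PI * x) by ring.
  rewrite sin_minus, cos_minus, sin_PI, cos_PI.
  replace (0 * cos (PI * x) - -1 * sin (PI * x)) with (sin (PI * x)) by ring.
  unfold Rdiv. ring.
Qed.

Lemma cotp_dup x : 0 < x < 1 -> cotp (x / 2) + cotp ((x + 1) / 2) = 2 * cotp x.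
Proof.
  intros Hx. unfold cotp. pose proof PI_RGT_0.
  set (a := PI * (x / 2)).
  replace (PI * ((x + 1) / 2)) with (a + PI / 2) by (unfold a; field).
  replace (PI * x) with (2 * a) by (unfold a; field).
  rewrite sin_plus, cos_plus, sin_PI2, cos_PI2, sin_2a, cos_2a.
  assert (0 < sin a) by (apply sin_gt_0; unfold a; nra).
  assert (0 < cos a) by (apply cos_gt_0; unfold a; nra).
  field. lra.
Qed.

Lemma cotp_odd x : cotp (- x) = - cotp x.
Proof.
  unfold cotp. replace (PI * - x) with (- (PI * x)) by ring.
  rewrite sin_neg, cos_neg. destruct (Req_dec (sin (PI * x)) 0) as [E|E].
  - rewrite E. rewrite Ropp_0. unfold Rdiv. rewrite Rinv_0. ring.
  - field. auto.
Qed.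

Lemma cotp_near0_pos x : 0 < x <= 1/4 -> Rabs (cotp x - 1 / x) <= PI ^ 2 * x.
Proof.
  intros Hx. pose proof PI_RGT_0. pose proof PI_4.
  set (u := PI * x).
  assert (Hu : 0 < u <= 1) by (unfold u; nra).
  pose proof (sin_lb1 u ltac:(lra)) as Hs.
  pose proof (sin_lt_x u ltac:(lra)) as Hs2.
  pose proof (cos_b1 u ltac:(lra)) as Hc.
  assert (Hsp : 5 * u / 6 <= sin u) by nra.
  assert (E : cotp x - 1 / x = (u * cos u - sin u) / (x * sin u)).
  { unfold cotp, u. field. split; try lra. fold u; lra. }
  rewrite E.
  assert (Hn : Rabs (u * cos u - sin u) <= u ^ 3 / 2).
  { apply Rabs_le. split; nra. }
  unfold Rdiv. rewrite Rabs_mult, Rabs_Rinv by nra.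
  rewrite (Rabs_right (x * sin u)) by nra.
  apply Rle_trans with (u ^ 3 / 2 * / (x * (5 * u / 6))).
  - apply Rmult_le_compat. apply Rabs_pos. left; apply Rinv_0_lt_compat; nra.
    auto. apply Rinv_le_contravar; nra.
  - replace (u ^ 3 / 2 * / (x * (5 * u / 6))) with (3 / 5 * PI ^ 2 * x).
    nra. unfold u. field. lra.
Qed.

Lemma cotp_near0 x : 0 < Rabs x <= 1/4 -> Rabs (cotp x - 1 / x) <= PI ^ 2 * Rabs x.
Proof.
  intros Hx. destruct (Rle_or_lt 0 x).
  - rewrite (Rabs_right x) in Hx |- * by lra. apply cotp_near0_pos; lra.
  - rewrite (Rabs_left x) in Hx |- * by lra.
    replace (cotp x - 1 / x) with (- (cotp (- x) - 1 / (- x))).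
    rewrite Rabs_Ropp. apply cotp_near0_pos; lra.
    rewrite cotp_odd. field. lra.
Qed.

Lemma cotp_cont c : 0 < c < 1 -> continuity_pt cotp c.
Proof.
  intros Hc. pose proof PI_RGT_0.
  assert (0 < sin (PI * c)) by (apply sin_gt_0; nra).
  apply continuity_pt_filterlim. apply (ex_derive_continuous cotp).
  unfold cotp. auto_derive. lra.
Qed.

Definition Hf (x : R) : R := if Req_EM_T x 0 then 0 else cotp x - gg x.

Lemma Hf_0 : Hf 0 = 0.
Proof. unfold Hf. destruct (Req_EM_T 0 0); [reflexivity | lra]. Qed.

Lemma Hf_nz x : x <> 0 -> Hf x = cotp x - 1 / x - G2 x.
Proof. intros H. unfold Hf, gg. destruct (Req_EM_T x 0); [lra | ring]. Qed.

Lemma Hf_cont_pos c : 0 < c < 1 -> continuity_pt Hf c.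
Proof.
  intros Hc.
  apply (continuity_pt_ext_loc (fun x => cotp x - 1 / x - G2 x)).
  - exists (mkposreal c (proj1 Hc)). intros y Hy.
    unfold ball in Hy; simpl in Hy; unfold AbsRing_ball, abs, minus, plus, opp in Hy; simpl in Hy.
    symmetry. apply Hf_nz. apply Rabs_def2 in Hy. lra.
  - apply (continuity_pt_minus (fun x => cotp x - 1 / x) G2).
    apply (continuity_pt_minus cotp (fun x => 1 / x)). apply cotp_cont; auto.
    apply continuity_pt_filterlim. apply (ex_derive_continuous (fun x => 1 / x)).
    auto_derive. lra.
    apply G2_cont. rewrite Rabs_right; lra.
Qed.

Lemma Hf_cont_0 : continuity_pt Hf 0.
Proof.
  pose proof (G2_cont 0 ltac:(rewrite Rabs_R0; lra)) as HG.
  unfold continuity_pt, continue_in, limit1_in, limit_in in *. simpl in *.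
  intros eps Heps.
  destruct (HG (eps / 2) ltac:(lra)) as [d [Hd Hd2]].
  pose proof PI_RGT_0.
  exists (Rmin d (Rmin (1/4) (eps / (2 * PI ^ 2)))).
  split.
  { apply Rmin_pos; auto. apply Rmin_pos. lra. apply Rdiv_lt_0_compat; nra. }
  intros x [_ Hx]. unfold R_dist in *. rewrite Rminus_0_r in Hx.
  rewrite Hf_0, Rminus_0_r.
  destruct (Req_dec x 0) as [E|E].
  { rewrite E, Hf_0, Rabs_R0. lra. }
  rewrite Hf_nz by auto.
  assert (Hx1 : Rabs x < d) by (eapply Rlt_le_trans; [apply Hx | apply Rmin_l]).
  assert (Hx2 : Rabs x < 1/4) by (eapply Rlt_le_trans; [apply Hx | eapply Rle_trans; [apply Rmin_r | apply Rmin_l]]).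
  assert (Hx3 : Rabs x < eps / (2 * PI ^ 2)) by (eapply Rlt_le_trans; [apply Hx | eapply Rle_trans; [apply Rmin_r | apply Rmin_r]]).
  assert (A : Rabs (G2 x - G2 0) < eps / 2).
  { apply Hd2. split. unfold D_x, no_cond; auto. rewrite Rminus_0_r. auto. }
  rewrite G2_0, Rminus_0_r in A.
  assert (B : Rabs (cotp x - 1 / x) <= PI ^ 2 * Rabs x).
  { apply cotp_near0. split. apply Rabs_pos_lt; auto. lra. }
  assert (C : PI ^ 2 * Rabs x < eps / 2).
  { apply Rmult_lt_compat_l with (r := PI ^ 2) in Hx3. 2: nra.
    replace (PI ^ 2 * (eps / (2 * PI ^ 2))) with (eps / 2) in Hx3 by (field; lra). auto. }
  eapply Rle_lt_trans. apply Rabs_triang. rewrite Rabs_Ropp. lra.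
Qed.

Lemma Hf_cont c : 0 <= c <= 1/2 -> continuity_pt Hf c.
Proof.
  intros Hc. destruct (Req_dec c 0) as [E|E].
  - subst. apply Hf_cont_0.
  - apply Hf_cont_pos. lra.
Qed.

Lemma Hf_half : Hf (1/2) = 0.
Proof.
  rewrite Hf_nz by lra.
  assert (cotp (1/2) = 0).
  { unfold cotp. replace (PI * (1/2)) with (PI/2) by field. rewrite cos_PI2. unfold Rdiv; ring. }
  assert (gg (1/2) = 0).
  { pose proof (gg_refl (1/2) ltac:(lra)). replace (1 - 1/2) with (1/2) in H0 by field. lra. }
  unfold gg in H0. lra.
Qed.

Lemma Hf_eq x : x <> 0 -> Hf x = cotp x - gg x.
Proof. intros. unfold Hf. destruct (Req_EM_T x 0); [lra|auto]. Qed.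

Lemma Hf_dup x : 0 <= x <= 1/2 -> Hf (x / 2) - Hf ((1 - x) / 2) = 2 * Hf x.
Proof.
  intros Hx. destruct (Req_dec x 0) as [E|E].
  - subst. replace (0/2) with 0 by field. replace ((1-0)/2) with (1/2) by field.
    rewrite Hf_0, Hf_half. ring.
  - rewrite !Hf_eq by lra.
    replace ((1 - x) / 2) with (1 - (x + 1) / 2) by field.
    rewrite cotp_refl, gg_refl by lra.
    pose proof (cotp_dup x ltac:(lra)). pose proof (gg_dup x ltac:(lra)). lra.
Qed.

Lemma pow2_ge k : INR k <= 2 ^ k.
Proof.
  induction k. simpl; lra. rewrite S_INR. simpl. 
  assert (1 <= 2 ^ k) by (apply pow_R1_Rle; lra). lra.
Qed.

Lemma Hf_zero x : 0 <= x <= 1/2 -> Hf x = 0.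
Proof.
  assert (Hc : forall c, 0 <= c <= 1/2 -> continuity_pt (fun y => Rabs (Hf y)) c).
  { intros c Hc. apply (continuity_pt_comp Hf Rabs). apply Hf_cont; auto. apply Rcontinuity_abs. }
  destruct (continuity_ab_maj _ 0 (1/2) ltac:(lra) Hc) as [x0 [Hmax Hx0]].
  set (M := Rabs (Hf x0)).
  assert (Hiter : forall k, Rabs (Hf (x0 / 2 ^ k)) = M).
  { induction k.
    - simpl. rewrite Rdiv_1_r. reflexivity.
    - set (y := x0 / 2 ^ k).
      assert (Hy : 0 <= y <= 1/2).
      { unfold y. assert (1 <= 2 ^ k) by (apply pow_R1_Rle; lra).
        split. apply Rdiv_le_0_compat; lra.
        apply Rle_trans with x0; [|lra]. unfold Rdiv.
        rewrite <- (Rmult_1_r x0) at 2. apply Rmult_le_compat_l; try lra.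
        rewrite <- Rinv_1. apply Rinv_le_contravar; lra. }
      replace (x0 / 2 ^ S k) with (y / 2) by (unfold y; simpl; field; apply pow_nonzero; lra).
      pose proof (Hf_dup y Hy) as D.
      pose proof (Hmax (y / 2) ltac:(lra)) as A.
      pose proof (Hmax ((1 - y) / 2) ltac:(lra)) as B.
      fold M in A, B.
      apply Rle_antisym; auto.
      assert (Rabs (2 * Hf y) <= Rabs (Hf (y / 2)) + Rabs (Hf ((1 - y) / 2))).
      { rewrite <- D. eapply Rle_trans. apply Rabs_triang. rewrite Rabs_Ropp. lra. }
      rewrite Rabs_mult, (Rabs_right 2) in H by lra. assert (Rabs (Hf y) = M) by exact IHk. lra. }
  assert (HM : M = 0).
  { destruct (Req_dec M 0) as [E|E]; auto.
    assert (HMp : 0 < M) by (pose proof (Rabs_pos (Hf x0)); fold M in H; lra).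
    pose proof Hf_cont_0 as C0.
    unfold continuity_pt, continue_in, limit1_in, limit_in in C0. simpl in C0.
    destruct (C0 M HMp) as [alp [Halp Hal]].
    destruct (INR_archimed alp 1 Halp) as [k Hk].
    assert (Hk0 : (0 < k)%nat) by (destruct k; simpl in Hk; [lra | lia]).
    assert (0 < INR k) by (apply lt_0_INR; auto).
    pose proof (pow2_ge k).
    specialize (Hal (x0 / 2 ^ k)).
    rewrite Hf_0 in Hal. unfold R_dist in Hal. rewrite !Rminus_0_r in Hal.
    assert (Rabs (x0 / 2 ^ k) < alp).
    { rewrite Rabs_right. 2: { apply Rle_ge, Rdiv_le_0_compat; lra. }
      apply Rle_lt_trans with (1 / INR k).
      unfold Rdiv. rewrite Rmult_1_l. apply Rle_trans with (1 * / 2 ^ k).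
      apply Rmult_le_compat_r. left; apply Rinv_0_lt_compat; lra. lra.
      rewrite Rmult_1_l. apply Rinv_le_contravar; lra.
      apply Rmult_lt_reg_r with (INR k); auto. unfold Rdiv. rewrite Rmult_assoc, Rinv_l; lra. }
    assert (Hx0n : x0 <> 0).
    { intros E0. unfold M in HMp. rewrite E0, Hf_0, Rabs_R0 in HMp. lra. }
    assert (Rabs (Hf (x0 / 2 ^ k)) < M).
    { apply Hal; split; [split; [unfold no_cond; auto | ] | auto].
      intros E1. symmetry in E1. unfold Rdiv in E1. apply Rmult_integral in E1.
      destruct E1 as [E1|E1]; [lra|]. apply Rinv_neq_0_compat in E1; auto. apply pow_nonzero; lra. }
    rewrite Hiter in H2. lra. }
  intros Hx. pose proof (Hmax x Hx). fold M in H. rewrite HM in H.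
  pose proof (Rabs_pos (Hf x)). apply Rabs_eq_0. lra.
Qed.

Lemma cot_pf x : 0 < x <= 1/2 -> cotp x = gg x.
Proof.
  intros Hx. pose proof (Hf_zero x ltac:(lra)). rewrite Hf_eq in H by lra. lra.
Qed.

Definition ttm (t : R) (k : nat) : R := 8 * t / ((2 * INR k + 1) ^ 2 - 4 * t ^ 2).

Lemma gN_tt t N : 0 <= t <= 1/4 ->
  gN (1/2 - t) N = ps (ttm t) N + 2 / (2 * INR N + 1 - 2 * t).
Proof.
  intros Ht. induction N.
  - unfold gN. simpl. field. lra.
  - unfold gN in *. cbn [ps]. rewrite <- Rplus_assoc, IHN. unfold gtm, ttm.
    rewrite S_INR. pose proof (pos_INR N).
    assert ((1/2 - t) ^ 2 - (INR N + 1) ^ 2 <> 0) by nra.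
    assert ((2 * INR N + 1) ^ 2 - 4 * t ^ 2 <> 0) by nra.
    field. repeat split; try lra; try nra.
Qed.

Lemma tan_pf t : 0 <= t <= 1/4 -> is_series (ttm t) (PI * tan (PI * t)).
Proof.
  intros Ht. apply is_series_ps.
  assert (E : PI * tan (PI * t) = gg (1/2 - t) - 0).
  { rewrite <- cot_pf by lra. unfold cotp, tan.
    replace (PI * (1/2 - t)) with (PI / 2 - PI * t) by field.
    rewrite sin_shift, cos_shift. unfold Rdiv; ring. }
  rewrite E.
  apply (is_lim_seq_ext (fun N => gN (1/2 - t) N - 2 / (2 * INR N + 1 - 2 * t))).
  { intros N. rewrite gN_tt by auto. ring. }
  apply is_lim_seq_minus'. apply gN_lim. rewrite Rabs_right; lra.
  apply (is_lim_seq_ext (fun N => 1 / ((1/2 - t) + INR N))).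
  { intros N. field. pose proof (pos_INR N). lra. }
  apply inv_lim.
Qed.

Lemma INR_odd k : INR (2 * k + 1) = 2 * INR k + 1.
Proof. rewrite plus_INR, mult_INR. simpl. ring. Qed.

Lemma y_bound k x : 0 <= x <= 1/4 -> 0 <= 2 * x * / (2 * INR k + 1) <= 1/2.
Proof.
  intros Hx. pose proof (pos_INR k).
  assert (0 < / (2 * INR k + 1)) by (apply Rinv_0_lt_compat; lra).
  assert (/ (2 * INR k + 1) <= 1).
  { rewrite <- Rinv_1. apply Rinv_le_contravar; lra. }
  split; nra.
Qed.

Ltac term_tac k x Hx :=
  unfold logC_term, LogP, ttm; rewrite INR_odd; simpl;
  pose proof (pos_INR k); pose proof (y_bound k x Hx);
  auto_derive; [ repeat split; lra
               | field; repeat split; nra ].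

Lemma term_derive2 k x : 0 <= x <= 1/4 ->
  is_derive (fun x => logC_term 2 x k) x (- (x ^ 1 * ttm x k)).
Proof. intros Hx. term_tac k x Hx. Qed.
Lemma term_derive3 k x : 0 <= x <= 1/4 ->
  is_derive (fun x => logC_term 3 x k) x (- (x ^ 2 * ttm x k)).
Proof. intros Hx. term_tac k x Hx. Qed.
Lemma term_derive4 k x : 0 <= x <= 1/4 ->
  is_derive (fun x => logC_term 4 x k) x (- (x ^ 3 * ttm x k)).
Proof. intros Hx. term_tac k x Hx. Qed.
Lemma term_derive5 k x : 0 <= x <= 1/4 ->
  is_derive (fun x => logC_term 5 x k) x (- (x ^ 4 * ttm x k)).
Proof. intros Hx. term_tac k x Hx. Qed.

Lemma sum_zero m : sum_f_R0 (fun j => 0 ^ S j / INR (S j)) m = 0.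
Proof. induction m; cbn [sum_f_R0]. simpl; field. rewrite IHm. simpl. unfold Rdiv. ring. Qed.

Lemma term_at0 r k : logC_term r 0 k = 0.
Proof.
  unfold logC_term, LogP. replace (2 * 0 / INR (2 * k + 1)) with 0 by (unfold Rdiv; ring).
  rewrite Ropp_0, Rminus_0_r, ln_1, sum_zero. ring.
Qed.

Lemma tt_bound t k : 0 <= t <= 1/4 -> Rabs (ttm t k) <= 8 * (1 / (INR k + 1) - 1 / (INR k + 2)).
Proof.
  intros Ht. unfold ttm. pose proof (pos_INR k).
  assert (D : 0 < (2 * INR k + 1) ^ 2 - 4 * t ^ 2) by nra.
  rewrite Rabs_right. 2: { apply Rle_ge, Rdiv_le_0_compat; lra. }
  replace (8 * (1 / (INR k + 1) - 1 / (INR k + 2))) with (8 / ((INR k + 1) * (INR k + 2))) by (field; lra).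
  apply Rle_trans with (2 / ((INR k + 1) * (INR k + 2) / 4)).
  - unfold Rdiv. apply Rmult_le_compat. lra. left; apply Rinv_0_lt_compat; lra. lra.
    apply Rinv_le_contravar. nra. nra.
  - right. field. lra.
Qed.

Lemma tt_cont k t : 0 <= t <= 1/4 -> forall r, continuous (fun t => t ^ r * ttm t k) t.
Proof.
  intros Ht r. apply (ex_derive_continuous (fun t => t ^ r * ttm t k)).
  unfold ttm. pose proof (pos_INR k). auto_derive. nra.
Qed.

Lemma tanF_cont t r : 0 <= t <= 1/4 -> continuous (fun t => t ^ r * (PI * tan (PI * t))) t.
Proof.
  intros Ht. apply (ex_derive_continuous (fun t => t ^ r * (PI * tan (PI * t)))).
  unfold tan. pose proof PI_RGT_0. pose proof PI_4.
  assert (0 < cos (PI * t)) by (apply cos_gt_0; nra).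
  auto_derive. lra.
Qed.

Lemma logC_int r :
  (forall k x, 0 <= x <= 1/4 -> is_derive (fun x => logC_term r x k) x (- (x ^ (r - 1) * ttm x k))) ->
  logC r (1/4) = - RInt (fun t => t ^ (r - 1) * (PI * tan (PI * t))) 0 (1/4).
Proof.
  intros Hd.
  assert (Hk : forall k, RInt (fun t => t ^ (r - 1) * ttm t k) 0 (1/4) = - logC_term r (1/4) k).
  { intros k.
    assert (I : is_RInt (fun t => - (t ^ (r - 1) * ttm t k)) 0 (1/4)
                  (minus (logC_term r (1/4) k) (logC_term r 0 k))).
    { apply (is_RInt_derive (fun x => logC_term r x k)).
      - intros x Hx. rewrite Rmin_left, Rmax_right in Hx by lra. apply Hd. lra.
      - intros x Hx. rewrite Rmin_left, Rmax_right in Hx by lra.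
        apply (continuous_opp (fun t => t ^ (r - 1) * ttm t k)). apply tt_cont. lra. }
    apply is_RInt_opp in I.
    rewrite term_at0 in I.
    apply is_RInt_ext with (g := fun t => t ^ (r - 1) * ttm t k) in I.
    2: { intros; unfold opp; simpl; ring. }
    transitivity (opp (minus (logC_term r (1 / 4) k) 0)).
    apply is_RInt_unique. exact I. unfold opp, minus, plus, opp; simpl. ring. }
  assert (HS : is_series (fun k => RInt (fun t => t ^ (r - 1) * ttm t k) 0 (1/4))
                 (RInt (fun t => t ^ (r - 1) * (PI * tan (PI * t))) 0 (1/4))).
  { apply (RInt_series (fun k t => t ^ (r - 1) * ttm t k) _ 0 (1/4) 8). lra.
    - intros k. apply (ex_RInt_continuous (V := R_CompleteNormedModule)). intros z Hz. rewrite Rmin_left, Rmax_right in Hz by lra.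
      apply tt_cont. lra.
    - apply (ex_RInt_continuous (V := R_CompleteNormedModule)). intros z Hz. rewrite Rmin_left, Rmax_right in Hz by lra.
      apply tanF_cont. lra.
    - intros N t Ht.
      rewrite ps_scal. rewrite <- Rmult_minus_distr_l. rewrite Rabs_mult.
      assert (A : Rabs (t ^ (r - 1)) <= 1).
      { rewrite Rabs_right. 2: { apply Rle_ge, pow_le; lra. }
        rewrite <- (pow1 (r - 1)). apply pow_incr. lra. }
      assert (B : Rabs (PI * tan (PI * t) - ps (ttm t) N) <= 8 / (INR N + 1)).
      { apply tail_tel. apply tan_pf; auto. intros; apply tt_bound; auto. }
      assert (0 <= 8 / (INR N + 1)) by (apply Rdiv_le_0_compat; pose proof (pos_INR N); lra).
      pose proof (Rabs_pos (t ^ (r - 1))). pose proof (Rabs_pos (PI * tan (PI * t) - ps (ttm t) N)).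
      nra. }
  unfold logC.
  apply is_series_unique.
  apply (is_series_ext (fun k => - RInt (fun t => t ^ (r - 1) * ttm t k) 0 (1/4))).
  { intros k. rewrite Hk. apply Ropp_involutive. }
  apply (is_series_opp (V := R_NormedModule)) in HS. exact HS.
Qed.

Definition Kj (j : nat) : R := RInt (fun t => t ^ j * ln (2 * cos (PI * t))) 0 (1/4).

Lemma cos_pos t : 0 <= t <= 1/4 -> 0 < cos (PI * t).
Proof. intros. pose proof PI_RGT_0. apply cos_gt_0; nra. Qed.

Lemma lnsqrt2 : ln (2 * cos (PI * (1/4))) = ln 2 / 2.
Proof.
  replace (PI * (1/4)) with (PI/4) by field. rewrite cos_PI4.
  assert (Hs : 0 < sqrt 2) by (apply sqrt_lt_R0; lra).
  replace (2 * (1 / sqrt 2)) with (sqrt 2).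
  2: { rewrite <- (sqrt_sqrt 2) at 2 by lra. field. lra. }
  assert (ln 2 = ln (sqrt 2) + ln (sqrt 2)).
  { rewrite <- ln_mult by auto. rewrite sqrt_sqrt by lra. auto. }
  lra.
Qed.

Lemma Lc_cont t j : 0 <= t <= 1/4 -> continuous (fun t => t ^ j * ln (2 * cos (PI * t))) t.
Proof.
  intros Ht. apply (ex_derive_continuous (fun t => t ^ j * ln (2 * cos (PI * t)))).
  pose proof (cos_pos t Ht). auto_derive. lra.
Qed.

Lemma ibp m :
  RInt (fun t => t ^ S m * (PI * tan (PI * t))) 0 (1/4)
  = - (1/4) ^ S m * (ln 2 / 2) + INR (S m) * Kj m.
Proof.
  assert (I1 : is_RInt (fun t => t ^ S m * (PI * tan (PI * t)) - INR (S m) * (t ^ m * ln (2 * cos (PI * t))))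
                 0 (1/4) (minus (- (1/4) ^ S m * ln (2 * cos (PI * (1/4)))) (- 0 ^ S m * ln (2 * cos (PI * 0))))).
  { apply (is_RInt_derive (fun t => - t ^ S m * ln (2 * cos (PI * t)))).
    - intros x Hx. rewrite Rmin_left, Rmax_right in Hx by lra.
      pose proof (cos_pos x Hx).
      auto_derive. lra.
      change (match m with 0%nat => 1 | S _ => INR m + 1 end) with (INR (S m)).
      unfold tan. simpl pow. field. lra.
    - intros x Hx. rewrite Rmin_left, Rmax_right in Hx by lra.
      apply (ex_derive_continuous (fun t => t ^ S m * (PI * tan (PI * t)) - INR (S m) * (t ^ m * ln (2 * cos (PI * t))))).
      pose proof (cos_pos x Hx). unfold tan. auto_derive. lra. }
  assert (I2 : is_RInt (fun t => INR (S m) * (t ^ m * ln (2 * cos (PI * t)))) 0 (1/4) (INR (S m) * Kj m)).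
  { apply (is_RInt_scal (fun t => t ^ m * ln (2 * cos (PI * t))) 0 (1/4) (INR (S m))).
    apply (RInt_correct (V := R_CompleteNormedModule)).
    apply (ex_RInt_continuous (V := R_CompleteNormedModule)). intros z Hz.
    rewrite Rmin_left, Rmax_right in Hz by lra. apply Lc_cont. lra. }
  pose proof (is_RInt_plus _ _ _ _ _ _ I1 I2) as I3.
  apply is_RInt_ext with (g := fun t => t ^ S m * (PI * tan (PI * t))) in I3.
  2: { intros; unfold plus; simpl. lra. }
  transitivity (plus (minus (- (1/4) ^ S m * ln (2 * cos (PI * (1/4)))) (- 0 ^ S m * ln (2 * cos (PI * 0)))) (INR (S m) * Kj m)).
  apply is_RInt_unique. exact I3.
  rewrite lnsqrt2. unfold minus, plus, opp; simpl. unfold plus, opp; simpl. ring.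
Qed.

Definition Bs (N : nat) (s phi : R) : R := ps (fun k => (- s) ^ k * cos (INR (k + 1) * phi)) N.
Definition FN (N : nat) (phi : R) : R := ps (fun k => (-1) ^ k * cos (INR (k + 1) * phi) / INR (k + 1)) N.

Lemma cos_rec a phi : cos (a + 2 * phi) = 2 * cos phi * cos (a + phi) - cos a.
Proof.
  replace (a + 2 * phi) with ((a + phi) + phi) by ring.
  replace a with ((a + phi) - phi) at 3 by ring.
  rewrite cos_plus, cos_minus. ring.
Qed.

Lemma Bs_id N s phi : (1 + 2 * s * cos phi + s ^ 2) * Bs N s phi =
  cos phi + s - (- s) ^ N * (cos (INR (N + 1) * phi) + s * cos (INR N * phi)).
Proof.
  induction N.
  - unfold Bs. simpl. rewrite Rmult_0_l, cos_0. replace (1 * phi) with phi by ring. ring.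
  - unfold Bs in *. cbn [ps]. rewrite Rmult_plus_distr_l, IHN.
    replace (INR (S N + 1) * phi) with (INR N * phi + 2 * phi) by (rewrite plus_INR, S_INR; simpl; ring).
    replace (INR (N + 1) * phi) with (INR N * phi + phi) by (rewrite plus_INR; simpl; ring).
    replace (INR (S N) * phi) with (INR N * phi + phi) by (rewrite S_INR; ring).
    rewrite cos_rec. simpl pow. ring.
Qed.

Lemma Bs_int N phi : is_RInt (fun s => Bs N s phi) 0 1 (FN N phi).
Proof.
  induction N.
  - unfold Bs, FN. simpl.
    generalize (is_RInt_const 0 1 (0:R)). unfold scal; simpl. unfold mult; simpl.
    rewrite Rmult_0_r. auto.
  - unfold Bs, FN in *. cbn [ps].
    apply (is_RInt_plus (fun s => ps (fun k => (- s) ^ k * cos (INR (k + 1) * phi)) N)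
             (fun s => (- s) ^ N * cos (INR (N + 1) * phi))). auto.
    pose proof (is_RInt_pow 0 1 N) as P.
    apply (is_RInt_scal _ _ _ ((-1) ^ N * cos (INR (N + 1) * phi))) in P.
    eapply is_RInt_ext. 2: { 
      replace ((-1) ^ N * cos (INR (N + 1) * phi) / INR (N + 1))
        with (scal ((-1) ^ N * cos (INR (N + 1) * phi)) (1 ^ S N / INR (S N) - 0 ^ S N / INR (S N))).
      exact P.
      unfold scal; simpl; unfold mult; simpl. rewrite ?pow1. change (match N with 0%nat => 1 | S _ => INR N + 1 end) with (INR (S N)). rewrite Nat.add_1_r. field.
      apply not_0_INR. lia. }
    intros x _. unfold scal; simpl; unfold mult; simpl.
    replace (- x) with ((-1) * x) by ring. rewrite Rpow_mult_distr. ring.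
Qed.

Lemma log_int phi : 0 <= cos phi ->
  is_RInt (fun s => (cos phi + s) / (1 + 2 * s * cos phi + s ^ 2)) 0 1 (ln (2 + 2 * cos phi) / 2).
Proof.
  intros Hc.
  assert (E : ln (2 + 2 * cos phi) / 2 = minus (ln (1 + 2 * 1 * cos phi + 1 ^ 2) / 2) (ln (1 + 2 * 0 * cos phi + 0 ^ 2) / 2)).
  { unfold minus, plus, opp; simpl. replace (1 + 2 * 0 * cos phi + 0 * (0 * 1)) with 1 by ring.
    rewrite ln_1. replace (1 + 2 * 1 * cos phi + 1 * (1 * 1)) with (2 + 2 * cos phi) by ring. field. }
  rewrite E.
  apply (is_RInt_derive (fun s => ln (1 + 2 * s * cos phi + s ^ 2) / 2)).
  - intros x Hx. rewrite Rmin_left, Rmax_right in Hx by lra.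
    auto_derive. nra. field. nra.
  - intros x Hx. rewrite Rmin_left, Rmax_right in Hx by lra.
    apply (ex_derive_continuous (fun s => (cos phi + s) / (1 + 2 * s * cos phi + s ^ 2))).
    auto_derive. nra.
Qed.

Lemma FN_bound N phi : 0 <= cos phi ->
  Rabs (ln (2 + 2 * cos phi) / 2 - FN N phi) <= 2 / (INR N + 1).
Proof.
  intros Hc.
  pose proof (is_RInt_minus _ _ _ _ _ _ (log_int phi Hc) (Bs_int N phi)) as I.
  apply (norm_RInt_le _ (fun s => 2 * s ^ N) 0 1 _ (2 / (INR N + 1))) in I.
  - exact I.
  - lra.
  - intros s Hs. unfold minus, plus, opp; simpl.
    try replace (s * (s * 1)) with (s ^ 2) by ring.
    assert (HD : 1 <= 1 + 2 * s * cos phi + s ^ 2) by nra.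
    pose proof (Bs_id N s phi) as E.
    assert (Bs N s phi = (cos phi + s - (- s) ^ N * (cos (INR (N + 1) * phi) + s * cos (INR N * phi)))
                          / (1 + 2 * s * cos phi + s ^ 2)).
    { rewrite <- E. field. lra. }
    rewrite H.
    replace ((cos phi + s) / (1 + 2 * s * cos phi + s ^ 2) +
      - ((cos phi + s - (- s) ^ N * (cos (INR (N + 1) * phi) + s * cos (INR N * phi))) /
         (1 + 2 * s * cos phi + s ^ 2)))
      with ((- s) ^ N * (cos (INR (N + 1) * phi) + s * cos (INR N * phi)) / (1 + 2 * s * cos phi + s ^ 2))
      by (field; lra).
    change (norm ?x) with (Rabs x).
    unfold Rdiv. rewrite !Rabs_mult, Rabs_Rinv by lra. rewrite (Rabs_right (1 + _ + _)) by lra.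
    rewrite <- RPow_abs. rewrite Rabs_Ropp. rewrite (Rabs_right s) by lra.
    assert (Rabs (cos (INR (N + 1) * phi) + s * cos (INR N * phi)) <= 2).
    { eapply Rle_trans. apply Rabs_triang. rewrite Rabs_mult, (Rabs_right s) by lra.
      pose proof (COS_bound (INR (N + 1) * phi)). pose proof (COS_bound (INR N * phi)).
      pose proof (Rabs_le (cos (INR (N + 1) * phi)) 1 ltac:(lra)).
      pose proof (Rabs_le (cos (INR N * phi)) 1 ltac:(lra)).
      pose proof (Rabs_pos (cos (INR N * phi))). nra. }
    assert (0 <= s ^ N) by (apply pow_le; lra).
    assert (0 < / (1 + 2 * s * cos phi + s ^ 2) <= 1).
    { split. apply Rinv_0_lt_compat; lra. rewrite <- Rinv_1. apply Rinv_le_contravar; lra. }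
    pose proof (Rabs_pos (cos (INR (N + 1) * phi) + s * cos (INR N * phi))).
    set (A := Rabs (cos (INR (N + 1) * phi) + s * cos (INR N * phi))) in *.
    set (I' := / (1 + 2 * s * cos phi + s ^ 2)) in *.
    assert (A * I' <= 2) by nra.
    replace (s ^ N * A * I') with (s ^ N * (A * I')) by ring.
    replace (2 * s ^ N) with (s ^ N * 2) by ring.
    apply Rmult_le_compat_l; auto.
  - pose proof (is_RInt_pow 0 1 N) as P.
    apply (is_RInt_scal _ _ _ 2) in P.
    replace (2 / (INR N + 1)) with (scal 2 (1 ^ S N / INR (S N) - 0 ^ S N / INR (S N))).
    exact P.
    unfold scal; simpl; unfold mult; simpl. rewrite ?pow1. change (match N with 0%nat => 1 | S _ => INR N + 1 end) with (INR (S N)). rewrite S_INR. field. pose proof (pos_INR N); lra.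
Qed.

Lemma lncos_bound N t : 0 <= t <= 1/4 ->
  Rabs (ln (2 * cos (PI * t)) - FN N (2 * PI * t)) <= 2 / (INR N + 1).
Proof.
  intros Ht. pose proof PI_RGT_0.
  assert (Hc : 0 < cos (PI * t)) by (apply cos_pos; auto).
  assert (Hc2 : 0 <= cos (2 * PI * t)).
  { apply cos_ge_0; nra. }
  replace (ln (2 * cos (PI * t))) with (ln (2 + 2 * cos (2 * PI * t)) / 2).
  apply FN_bound; auto.
  replace (2 * PI * t) with (2 * (PI * t)) by ring. rewrite cos_2a.
  replace (2 + 2 * (cos (PI * t) * cos (PI * t) - sin (PI * t) * sin (PI * t)))
    with ((2 * cos (PI * t)) * (2 * cos (PI * t))).
  rewrite ln_mult by lra. field.
  pose proof (sin2_cos2 (PI * t)). unfold Rsqr in H0. nra.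
Qed.

Definition cj (j k : nat) : R := RInt (fun t => t ^ j * cos (INR (k + 1) * (2 * PI * t))) 0 (1/4).

Lemma Kj_series j : is_series (fun k => (-1) ^ k / INR (k + 1) * cj j k) (Kj j).
Proof.
  assert (Hcont : forall k, ex_RInt (fun t => t ^ j * cos (INR (k + 1) * (2 * PI * t))) 0 (1/4)).
  { intros k. apply (ex_RInt_continuous (V := R_CompleteNormedModule)). intros z Hz.
    apply (ex_derive_continuous (fun t => t ^ j * cos (INR (k + 1) * (2 * PI * t)))). auto_derive. auto. }
  pose proof (RInt_series (fun k t => t ^ j * ((-1) ^ k * cos (INR (k + 1) * (2 * PI * t)) / INR (k + 1)))
                (fun t => t ^ j * ln (2 * cos (PI * t))) 0 (1/4) 2) as HS.
  assert (Hk : forall k, RInt (fun t => t ^ j * ((-1) ^ k * cos (INR (k + 1) * (2 * PI * t)) / INR (k + 1))) 0 (1/4)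
                  = (-1) ^ k / INR (k + 1) * cj j k).
  { intros k. unfold cj.
    change ((-1) ^ k / INR (k + 1) * RInt (fun t => t ^ j * cos (INR (k + 1) * (2 * PI * t))) 0 (1 / 4))
      with (scal ((-1) ^ k / INR (k + 1)) (RInt (fun t => t ^ j * cos (INR (k + 1) * (2 * PI * t))) 0 (1 / 4))).
    rewrite <- (RInt_scal (V := R_CompleteNormedModule)) by apply Hcont.
    apply RInt_ext. intros x _. unfold scal; simpl; unfold mult; simpl. field.
    apply not_0_INR. lia. }
  apply (is_series_ext _ _ _ Hk). apply HS.
  - lra.
  - intros k. apply (ex_RInt_continuous (V := R_CompleteNormedModule)). intros z Hz.
    apply (ex_derive_continuous (fun t => t ^ j * ((-1) ^ k * cos (INR (k + 1) * (2 * PI * t)) / INR (k + 1)))).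
    auto_derive; auto.
  - apply (ex_RInt_continuous (V := R_CompleteNormedModule)). intros z Hz.
    rewrite Rmin_left, Rmax_right in Hz by lra. apply Lc_cont. lra.
  - intros N t Ht.
    cbv beta.
    rewrite ps_scal. fold (FN N (2 * PI * t)).
    rewrite <- Rmult_minus_distr_l, Rabs_mult.
    assert (A : Rabs (t ^ j) <= 1).
    { rewrite Rabs_right. 2: { apply Rle_ge, pow_le; lra. }
      rewrite <- (pow1 j). apply pow_incr. lra. }
    pose proof (lncos_bound N t Ht).
    assert (0 <= 2 / (INR N + 1)) by (apply Rdiv_le_0_compat; pose proof (pos_INR N); lra).
    pose proof (Rabs_pos (t ^ j)). pose proof (Rabs_pos (ln (2 * cos (PI * t)) - FN N (2 * PI * t))).
    nra.
Qed.

Definition sk (k : nat) := sin (PI * INR (k + 1) / 2).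
Definition qk (k : nat) := cos (PI * INR (k + 1) / 2).
Definition wk (k : nat) := 2 * PI * INR (k + 1).

Lemma wk_pos k : 0 < wk k.
Proof. unfold wk. pose proof PI_RGT_0. assert (0 < INR (k + 1)) by (apply lt_0_INR; lia). nra. Qed.

Ltac cj_tac A :=
  intros; unfold cj;
  let k := match goal with |- context [INR (?k + 1)] => k end in
  pose proof PI_RGT_0; assert (0 < INR (k + 1)) by (apply lt_0_INR; lia);
  unfold sk, qk, wk;
  match goal with |- RInt ?f 0 (1/4) = ?v =>
    transitivity (minus (A (1/4)) (A 0)); [
      apply is_RInt_unique; apply (is_RInt_derive A);
      [ intros x _; auto_derive; [auto | field; repeat split; lra]
      | intros x _; apply (ex_derive_continuous f); auto_derive; auto ]
    | unfold minus, plus, opp; simpl;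
      rewrite ?Rmult_0_r, ?Rmult_0_l, ?sin_0, ?cos_0;
      replace (INR (k + 1) * (2 * PI * (1 / 4))) with (PI * INR (k + 1) / 2) by field;
      field; repeat split; lra ]
  end.

Lemma cj0 k : cj 0 k = sk k / wk k.
Proof.
  cj_tac (fun t => sin (INR (k + 1) * (2 * PI * t)) / (INR (k + 1) * (2 * PI))).
Qed.

Lemma cj1 k : cj 1 k = sk k / (4 * wk k) + qk k / wk k ^ 2 - 1 / wk k ^ 2.
Proof.
  cj_tac (fun t => t * sin (INR (k + 1) * (2 * PI * t)) / (INR (k + 1) * (2 * PI))
                 + cos (INR (k + 1) * (2 * PI * t)) / (INR (k + 1) * (2 * PI)) ^ 2).
Qed.

Lemma cj2 k : cj 2 k = sk k / (16 * wk k) + qk k / (2 * wk k ^ 2) - 2 * sk k / wk k ^ 3.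
Proof.
  cj_tac (fun t => t ^ 2 * sin (INR (k + 1) * (2 * PI * t)) / (INR (k + 1) * (2 * PI))
                 + 2 * t * cos (INR (k + 1) * (2 * PI * t)) / (INR (k + 1) * (2 * PI)) ^ 2
                 - 2 * sin (INR (k + 1) * (2 * PI * t)) / (INR (k + 1) * (2 * PI)) ^ 3).
Qed.

Lemma cj3 k : cj 3 k = sk k / (64 * wk k) + 3 * qk k / (16 * wk k ^ 2) - 3 * sk k / (2 * wk k ^ 3)
                      - 6 * qk k / wk k ^ 4 + 6 / wk k ^ 4.
Proof.
  cj_tac (fun t => t ^ 3 * sin (INR (k + 1) * (2 * PI * t)) / (INR (k + 1) * (2 * PI))
                 + 3 * t ^ 2 * cos (INR (k + 1) * (2 * PI * t)) / (INR (k + 1) * (2 * PI)) ^ 2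
                 - 6 * t * sin (INR (k + 1) * (2 * PI * t)) / (INR (k + 1) * (2 * PI)) ^ 3
                 - 6 * cos (INR (k + 1) * (2 * PI * t)) / (INR (k + 1) * (2 * PI)) ^ 4).
Qed.

Lemma interleave (a b : nat -> R) (l : R) :
  (forall N, ps a (2 * N) = ps b N) ->
  (forall N, ps a (2 * N + 1) = ps b N \/ ps a (2 * N + 1) = ps b (S N)) ->
  is_series b l -> is_series a l.
Proof.
  intros H1 H2 Hb. apply ps_is_series in Hb. apply is_series_ps.
  apply is_lim_seq_spec in Hb. apply is_lim_seq_spec. intros eps.
  destruct (Hb eps) as [N0 HN0]. exists (2 * N0)%nat. intros n Hn.
  destruct (Nat.Even_or_Odd n) as [[m Hm]|[m Hm]]; subst n.
  - rewrite H1. apply HN0. lia.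
  - destruct (H2 m) as [E|E]; rewrite E; apply HN0; lia.
Qed.

Lemma interleave_even (a b : nat -> R) (l : R) :
  (forall i, a (2 * i)%nat = b i) -> (forall i, a (2 * i + 1)%nat = 0) ->
  is_series b l -> is_series a l.
Proof.
  intros Ha Hb.
  assert (E : forall N, ps a (2 * N) = ps b N).
  { induction N. reflexivity.
    replace (2 * S N)%nat with (S (S (2 * N))) by lia. cbn [ps].
    rewrite IHN. replace (S (2 * N)) with (2 * N + 1)%nat by lia. rewrite Ha, Hb. ring. }
  apply interleave; auto.
  intros N. right. replace (2 * N + 1)%nat with (S (2 * N)) by lia. cbn [ps].
  rewrite E, Ha. reflexivity.
Qed.

Lemma interleave_odd (a b : nat -> R) (l : R) :
  (forall i, a (2 * i)%nat = 0) -> (forall i, a (2 * i + 1)%nat = b i) ->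
  is_series b l -> is_series a l.
Proof.
  intros Ha Hb.
  assert (E : forall N, ps a (2 * N) = ps b N).
  { induction N. reflexivity.
    replace (2 * S N)%nat with (S (S (2 * N))) by lia. cbn [ps].
    rewrite IHN. replace (S (2 * N)) with (2 * N + 1)%nat by lia. rewrite Ha, Hb. ring. }
  apply interleave; auto.
  intros N. left. replace (2 * N + 1)%nat with (S (2 * N)) by lia. cbn [ps].
  rewrite E, Ha. ring.
Qed.

Lemma trig_npi i : sin (INR i * PI) = 0 /\ cos (INR i * PI) = (-1) ^ i.
Proof.
  induction i.
  - simpl. rewrite Rmult_0_l, sin_0, cos_0. auto.
  - rewrite S_INR. replace ((INR i + 1) * PI) with (INR i * PI + PI) by ring.
    rewrite neg_sin, neg_cos. destruct IHi as [A B]. rewrite A, B. simpl. split; ring.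
Qed.

Lemma sk_even i : sk (2 * i) = (-1) ^ i.
Proof.
  unfold sk. replace (PI * INR (2 * i + 1) / 2) with (INR i * PI + PI / 2)
    by (rewrite plus_INR, mult_INR; simpl; field).
  rewrite sin_plus, sin_PI2, cos_PI2. destruct (trig_npi i) as [A B]. rewrite A, B. ring.
Qed.

Lemma sk_odd i : sk (2 * i + 1) = 0.
Proof.
  unfold sk. replace (PI * INR (2 * i + 1 + 1) / 2) with (INR (i + 1) * PI)
    by (rewrite !plus_INR, mult_INR; simpl; field).
  apply trig_npi.
Qed.

Lemma qk_even i : qk (2 * i) = 0.
Proof.
  unfold qk. replace (PI * INR (2 * i + 1) / 2) with (INR i * PI + PI / 2)
    by (rewrite plus_INR, mult_INR; simpl; field).
  rewrite cos_plus, sin_PI2, cos_PI2. destruct (trig_npi i) as [A B]. rewrite A. ring.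
Qed.

Lemma qk_odd i : qk (2 * i + 1) = (-1) ^ (i + 1).
Proof.
  unfold qk. replace (PI * INR (2 * i + 1 + 1) / 2) with (INR (i + 1) * PI)
    by (rewrite !plus_INR, mult_INR; simpl; field).
  apply trig_npi.
Qed.

Lemma inv_pow_bound x p : 1 <= x -> (2 <= p)%nat -> 0 < / x ^ p <= / x ^ 2.
Proof.
  intros Hx Hp. split. apply Rinv_0_lt_compat, pow_lt; lra.
  apply Rinv_le_contravar. apply pow_lt; lra.
  replace p with (2 + (p - 2))%nat by lia. rewrite pow_add.
  assert (1 <= x ^ (p - 2)) by (apply pow_R1_Rle; lra).
  assert (0 < x ^ 2) by (apply pow_lt; lra). nra.
Qed.

Lemma zetaE_series p : (2 <= p)%nat -> is_series (fun n => (-1) ^ n / INR (n + 1) ^ p) (zetaE p).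
Proof.
  intros Hp. apply Series_correct. apply (ex_series_tel _ 2). intros k.
  rewrite plus_INR. simpl INR.
  pose proof (pos_INR k).
  pose proof (inv_pow_bound (INR k + 1) p ltac:(lra) Hp).
  unfold Rdiv. rewrite Rabs_mult, pow_1_abs, Rmult_1_l, Rabs_right by lra.
  replace (2 * (1 * / (INR k + 1) - 1 * / (INR k + 2))) with (2 / ((INR k + 1) * (INR k + 2))) by (field; lra).
  eapply Rle_trans. apply H0. simpl. rewrite Rmult_1_r.
  apply Rle_trans with (/ ((INR k + 1) * (INR k + 2) / 2)).
  apply Rinv_le_contravar. nra. nra. right. field. lra.
Qed.

Lemma dbeta_series p : (2 <= p)%nat -> is_series (fun n => (-1) ^ n / INR (2 * n + 1) ^ p) (dbeta p).
Proof.
  intros Hp. apply Series_correct. apply (ex_series_tel _ 2). intros k.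
  rewrite plus_INR, mult_INR. change (INR 2) with 2. change (INR 1) with 1.
  pose proof (pos_INR k).
  pose proof (inv_pow_bound (2 * INR k + 1) p ltac:(lra) Hp).
  unfold Rdiv. rewrite Rabs_mult, pow_1_abs, Rmult_1_l, Rabs_right by lra.
  replace (2 * (1 * / (INR k + 1) - 1 * / (INR k + 2))) with (2 / ((INR k + 1) * (INR k + 2))) by (field; lra).
  eapply Rle_trans. apply H0. simpl. rewrite Rmult_1_r.
  apply Rle_trans with (/ ((INR k + 1) * (INR k + 2) / 2)).
  apply Rinv_le_contravar. nra. nra. right. field. lra.
Qed.

Lemma SA p : (2 <= p)%nat -> is_series (fun k => (-1) ^ k * sk k / INR (k + 1) ^ p) (dbeta p).
Proof.
  intros Hp. apply (interleave_even _ (fun n => (-1) ^ n / INR (2 * n + 1) ^ p)).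
  - intros i. rewrite sk_even. rewrite pow_1_even. unfold Rdiv; ring.
  - intros i. rewrite sk_odd. unfold Rdiv. ring.
  - apply dbeta_series; auto.
Qed.

Lemma SB p : (2 <= p)%nat -> is_series (fun k => (-1) ^ k * qk k / INR (k + 1) ^ p) (zetaE p / 2 ^ p).
Proof.
  intros Hp. apply (interleave_odd _ (fun n => (-1) ^ n / INR (n + 1) ^ p / 2 ^ p)).
  - intros i. rewrite qk_even. unfold Rdiv. ring.
  - intros i. rewrite qk_odd.
    replace ((-1) ^ (i + 1)) with (- (-1) ^ i) by (rewrite pow_add; simpl; ring).
    replace (2 * i + 1 + 1)%nat with (2 * (i + 1))%nat by lia.
    rewrite mult_INR, Rpow_mult_distr. change (INR 2) with 2.
    rewrite pow_add. replace (2 * i + 1)%nat with (S (2 * i)) by lia. simpl pow at 2.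
    rewrite pow_1_even. field. split; apply pow_nonzero.
    rewrite plus_INR; simpl; pose proof (pos_INR i); lra. lra.
  - apply (is_series_scal_r (/ 2 ^ p)). apply zetaE_series; auto.
Qed.

Lemma SC p : (2 <= p)%nat -> is_series (fun k => (-1) ^ k / INR (k + 1) ^ p) (zetaE p).
Proof. apply zetaE_series. Qed.

Lemma ser_plus a b (la lb : R) : is_series a la -> is_series b lb -> is_series (fun n => a n + b n) (la + lb).
Proof. intros A B. apply (is_series_plus a b la lb A B). Qed.

Lemma ser_scal (c : R) a (la : R) : is_series a la -> is_series (fun n => c * a n) (c * la).
Proof. intros A. apply (is_series_scal c a la A). Qed.

Lemma ser_ext (a b : nat -> R) (l : R) : (forall n, a n = b n) -> is_series a l -> is_series b l.
Proof. intros E A. apply (is_series_ext a b l E A). Qed.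

Lemma INRk_nz k : INR (k + 1) <> 0.
Proof. apply not_0_INR. lia. Qed.

Ltac kj_tac k :=
  unfold wk; pose proof (INRk_nz k); pose proof PI_RGT_0;
  field; repeat split; try lra; auto.

Lemma K0 : Kj 0 = dbeta 2 / (2 * PI).
Proof.
  rewrite <- (is_series_unique _ _ (Kj_series 0)). apply is_series_unique.
  apply (ser_ext (fun k => / (2 * PI) * ((-1) ^ k * sk k / INR (k + 1) ^ 2))).
  { intros k. rewrite cj0. kj_tac k. }
  replace (dbeta 2 / (2 * PI)) with (/ (2 * PI) * dbeta 2) by (unfold Rdiv; ring).
  apply ser_scal. apply SA. lia.
Qed.

Lemma K1 : Kj 1 = dbeta 2 / (8 * PI) + zetaE 3 / 2 ^ 3 / (4 * PI ^ 2) - zetaE 3 / (4 * PI ^ 2).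
Proof.
  rewrite <- (is_series_unique _ _ (Kj_series 1)). apply is_series_unique.
  apply (ser_ext (fun k => (/ (8 * PI) * ((-1) ^ k * sk k / INR (k + 1) ^ 2)
       + / (4 * PI ^ 2) * ((-1) ^ k * qk k / INR (k + 1) ^ 3))
       + (- / (4 * PI ^ 2)) * ((-1) ^ k / INR (k + 1) ^ 3))).
  { intros k. rewrite cj1. kj_tac k. }
  replace (dbeta 2 / (8 * PI) + zetaE 3 / 2 ^ 3 / (4 * PI ^ 2) - zetaE 3 / (4 * PI ^ 2))
    with ((/ (8 * PI) * dbeta 2 + / (4 * PI ^ 2) * (zetaE 3 / 2 ^ 3)) + (- / (4 * PI ^ 2)) * zetaE 3)
    by (unfold Rdiv; ring).
  apply ser_plus. apply ser_plus.
  apply ser_scal. apply SA. lia.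
  apply ser_scal. apply SB. lia.
  apply ser_scal. apply SC. lia.
Qed.

Lemma K2 : Kj 2 = dbeta 2 / (32 * PI) + zetaE 3 / 2 ^ 3 / (8 * PI ^ 2) - dbeta 4 / (4 * PI ^ 3).
Proof.
  rewrite <- (is_series_unique _ _ (Kj_series 2)). apply is_series_unique.
  apply (ser_ext (fun k => (/ (32 * PI) * ((-1) ^ k * sk k / INR (k + 1) ^ 2)
       + / (8 * PI ^ 2) * ((-1) ^ k * qk k / INR (k + 1) ^ 3))
       + (- / (4 * PI ^ 3)) * ((-1) ^ k * sk k / INR (k + 1) ^ 4))).
  { intros k. rewrite cj2. kj_tac k. }
  replace (dbeta 2 / (32 * PI) + zetaE 3 / 2 ^ 3 / (8 * PI ^ 2) - dbeta 4 / (4 * PI ^ 3))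
    with ((/ (32 * PI) * dbeta 2 + / (8 * PI ^ 2) * (zetaE 3 / 2 ^ 3)) + (- / (4 * PI ^ 3)) * dbeta 4)
    by (unfold Rdiv; ring).
  apply ser_plus. apply ser_plus.
  apply ser_scal. apply SA. lia.
  apply ser_scal. apply SB. lia.
  apply ser_scal. apply SA. lia.
Qed.

Lemma K3 : Kj 3 = dbeta 2 / (128 * PI) + 3 * (zetaE 3 / 2 ^ 3) / (64 * PI ^ 2)
   - 3 * dbeta 4 / (16 * PI ^ 3) - 6 * (zetaE 5 / 2 ^ 5) / (16 * PI ^ 4) + 6 * zetaE 5 / (16 * PI ^ 4).
Proof.
  rewrite <- (is_series_unique _ _ (Kj_series 3)). apply is_series_unique.
  apply (ser_ext (fun k => (((/ (128 * PI) * ((-1) ^ k * sk k / INR (k + 1) ^ 2)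
       + (3 / (64 * PI ^ 2)) * ((-1) ^ k * qk k / INR (k + 1) ^ 3))
       + (- 3 / (16 * PI ^ 3)) * ((-1) ^ k * sk k / INR (k + 1) ^ 4))
       + (- 6 / (16 * PI ^ 4)) * ((-1) ^ k * qk k / INR (k + 1) ^ 5))
       + (6 / (16 * PI ^ 4)) * ((-1) ^ k / INR (k + 1) ^ 5))).
  { intros k. rewrite cj3. kj_tac k. }
  replace (dbeta 2 / (128 * PI) + 3 * (zetaE 3 / 2 ^ 3) / (64 * PI ^ 2)
   - 3 * dbeta 4 / (16 * PI ^ 3) - 6 * (zetaE 5 / 2 ^ 5) / (16 * PI ^ 4) + 6 * zetaE 5 / (16 * PI ^ 4))
    with ((((/ (128 * PI) * dbeta 2 + (3 / (64 * PI ^ 2)) * (zetaE 3 / 2 ^ 3))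
            + (- 3 / (16 * PI ^ 3)) * dbeta 4) + (- 6 / (16 * PI ^ 4)) * (zetaE 5 / 2 ^ 5))
            + (6 / (16 * PI ^ 4)) * zetaE 5)
    by (unfold Rdiv; ring).
  apply ser_plus. apply ser_plus. apply ser_plus. apply ser_plus.
  apply ser_scal. apply SA. lia.
  apply ser_scal. apply SB. lia.
  apply ser_scal. apply SA. lia.
  apply ser_scal. apply SB. lia.
  apply ser_scal. apply SC. lia.
Qed.

Theorem corollary2p6 :
  logC 2 (1/4) = ln 2 / 8 - Catalan / (2 * PI) /\
  logC 3 (1/4) = ln 2 / 32 - Catalan / (4 * PI) + 7 * zetaE 3 / (16 * PI ^ 2) /\
  logC 4 (1/4) = ln 2 / 128 - 3 * Catalan / (32 * PI) - 3 * zetaE 3 / (64 * PI ^ 2)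
                 + 3 * dbeta 4 / (4 * PI ^ 3) /\
  logC 5 (1/4) = ln 2 / 512 - Catalan / (32 * PI) - 3 * zetaE 3 / (128 * PI ^ 2)
                 + 3 * dbeta 4 / (4 * PI ^ 3) - 93 * zetaE 5 / (64 * PI ^ 4).
Proof.
  pose proof PI_RGT_0 as HPI.
  unfold Catalan.
  repeat split.
  - rewrite (logC_int 2 term_derive2). simpl Nat.sub. rewrite ibp, K0. simpl INR. field. lra.
  - rewrite (logC_int 3 term_derive3). simpl Nat.sub. rewrite ibp, K1.
    simpl INR. field. lra.
  - rewrite (logC_int 4 term_derive4). simpl Nat.sub. rewrite ibp, K2.
    simpl INR. field. lra.
  - rewrite (logC_int 5 term_derive5). simpl Nat.sub. rewrite ibp, K3.
    simpl INR. field. lra.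
Qed.
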